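(* Let $\rho^w$ and $\rho^b$ be convex risk measures. Then an equal risk price exists if and only if the fair price interval is bounded (i.e. $p_0^w\in\mathbb{R}$ and $p_0^b\in\mathbb{R}$). Moreover, when it exists, the equal risk price equals \[p_0^*=\frac{\varrho^w(0)-\varrho^b(0)}{2},\] which is the center of the fair price interval $[p_0^b,p_0^w]$ if the latter is non-empty.
   Context: Let $(\Omega,\mathcal{F},(\mathcal{F}_t)_{0\le t\le T},\mathbb{P})$ be a filtered probability space, with a money market account with zero interest rate and a risky asset $S_t$, a locally bounded real-valued semimartingale adapted to the filtration; the set of equivalent local martingale measures for $S$ is non-empty. For $p_0\in\mathbb{R}$, the set of admissible self-financing strategies is $\mathcal{X}(p_0)=\{X: \exists\,\xi\ \text{adapted},\ \exists c\in\mathbb{R},\ X_t=p_0+\int_0^t\xi_s\,dS_s\ge c\ \forall t\in[0,T]\}$. The option pays $F(S_T,Y_T)$ at $T$, where $Y_t$ is an adapted auxiliary finite-dimensional process. A risk measure maps random liabilities (costs) in $\mathcal{L}_p(\Omega,\mathcal{F}_T,\mathbb{P})$ to $\mathbb{R}\cup\{\infty\}$. A convex risk measure $\rho$ satisfies: monotonicity ($X\le Z$ a.s. $\Rightarrow \rho(X)\le\rho(Z)$), translation invariance ($\rho(X+m)=\rho(X)+m$ for $m\in\mathbb{R}$), normalization $\rho(0)=0$, and convexity ($\rho(\lambda X+(1-\lambda)Z)\le\lambda\rho(X)+(1-\lambda)\rho(Z)$ for $\lambda\in[0,1]$). Given risk measures $\rho^w,\rho^b$, define the minimal risks $\varrho^w(p_0)=\inf_{X\in\mathcal{X}(p_0)}\rho^w(F(S_T,Y_T)-X_T)$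 and $\varrho^b(p_0)=\inf_{X\in\mathcal{X}(-p_0)}\rho^b(-F(S_T,Y_T)-X_T)$. The equal risk price is the unique $p_0^*\in\mathbb{R}$ such that $\varrho^w(p_0^* )=\varrho^b(p_0^* )\in\mathbb{R}$, when such a unique price exists. The fair price interval is $[p_0^b,p_0^w]$ with $p_0^b=\sup\{p_0:\varrho^b(p_0)\le 0\}$ and $p_0^w=\inf\{p_0:\varrho^w(p_0)\le 0\}$. *)

(* Defs.v *)
From HB Require Import structures.
From mathcomp Require Import all_boot all_order all_algebra.
From mathcomp Require Import all_classical all_reals all_analysis.
Set Implicit Arguments. Unset Strict Implicit. Unset Printing Implicit Defensive.
Import Order.TTheory GRing.Theory Num.Theory.
Local Open Scope classical_set_scope.
Local Open Scope ring_scope.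

Section EqualRiskDefs.
Context {d : measure_display} {Omega : measurableType d} {R : realType}.

Definition sub_sigma (G : set (set Omega)) :=
  sigma_algebra setT G /\ G `<=` measurable.

Definition filtration (T : R) (Fl : R -> set (set Omega)) :=
  (forall t, 0 <= t <= T -> sub_sigma (Fl t)) /\
  (forall s t, 0 <= s -> s <= t -> t <= T -> Fl s `<=` Fl t).

Definition G_measurable (G : set (set Omega)) (f : Omega -> R) :=
  forall B : set R, measurable B -> G (f @^-1` B).

Definition adapted (T : R) (Fl : R -> set (set Omega)) (X : R -> Omega -> R) :=
  forall t, 0 <= t <= T -> G_measurable (Fl t) (X t).

Definition inLp (P : probability Omega R) (p : \bar R) (G : set (set Omega))
  (f : Omega -> R) :=
  G_measurable G f /\ ('N[P]_p[EFin \o f] < +oo)%E.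

(* Admissible self-financing strategies with initial wealth p0.
   [stoch_int xi S t w] stands for the stochastic integral
   (\int_0^t xi_s dS_s)(w). *)
Definition admissible (T : R) (Fl : R -> set (set Omega))
  (stoch_int : (R -> Omega -> R) -> (R -> Omega -> R) -> R -> Omega -> R)
  (S : R -> Omega -> R) (p0 : R) : set (R -> Omega -> R) :=
  [set X | exists xi, adapted T Fl xi /\
     exists c : R, forall t, 0 <= t <= T -> forall w,
       X t w = p0 + stoch_int xi S t w /\ c <= X t w].

Definition convex_risk_measure (P : probability Omega R) (p : \bar R)
  (G : set (set Omega)) (rho : (Omega -> R) -> \bar R) :=
  (forall X, inLp P p G X -> rho X != -oo%E) /\
  (forall X Z, inLp P p G X -> inLp P p G Z ->
     {ae P, forall w, X w <= Z w} -> (rho X <= rho Z)%E) /\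
  (forall X (m : R), inLp P p G X -> rho (fun w => X w + m) = (rho X + m%:E)%E) /\
  rho (fun _ => 0) = 0%E /\
  (forall X Z (l : R), inLp P p G X -> inLp P p G Z -> 0 <= l <= 1 ->
     (rho (fun w => (l * X w + (1 - l) * Z w)%R) <=
      l%:E * rho X + (1 - l)%R%:E * rho Z)%E).

(* minimal risk of the writer (seller), liability H = F(S_T, Y_T) *)
Definition min_risk_w (P : probability Omega R) (p : \bar R) (T : R)
  (Fl : R -> set (set Omega)) stoch_int (S : R -> Omega -> R)
  (rho : (Omega -> R) -> \bar R) (H : Omega -> R) (p0 : R) : \bar R :=
  ereal_inf [set rho (fun w => H w - X T w) | X in
    [set X | admissible T Fl stoch_int S p0 X /\
             inLp P p (Fl T) (fun w => H w - X T w)]].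

Definition min_risk_b (P : probability Omega R) (p : \bar R) (T : R)
  (Fl : R -> set (set Omega)) stoch_int (S : R -> Omega -> R)
  (rho : (Omega -> R) -> \bar R) (H : Omega -> R) (p0 : R) : \bar R :=
  ereal_inf [set rho (fun w => - H w - X T w) | X in
    [set X | admissible T Fl stoch_int S (- p0) X /\
             inLp P p (Fl T) (fun w => - H w - X T w)]].

End EqualRiskDefs.

Definition equal_risk_price {R : realType} (rw rb : R -> \bar R) (p0 : R) :=
  rw p0 = rb p0 /\ rw p0 \is a fin_num.

Definition fair_w {R : realType} (rw : R -> \bar R) : \bar R :=
  ereal_inf [set p%:E | p in [set p | (rw p <= 0)%E]].
Definition fair_b {R : realType} (rb : R -> \bar R) : \bar R :=
  ereal_sup [set p%:E | p in [set p | (rb p <= 0)%E]].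

(* Main.v *)
Require Import Defs.
From HB Require Import structures.
From mathcomp Require Import all_boot all_order all_algebra.
From mathcomp Require Import all_classical all_reals all_analysis.
From mathcomp Require Import measurable_realfun ess_sup_inf.
From mathcomp Require Import ring lra.
Import Order.TTheory GRing.Theory Num.Theory.
Local Open Scope classical_set_scope.
Local Open Scope ring_scope.
Lemma inLp_shift (d : measure_display) (Omega : measurableType d)
  (R : realType) (P : probability Omega R) (p : \bar R) (hp : (1 <= p)%E)
  (G : set (set Omega)) (hG : G `<=` measurable) (f : Omega -> R) (c : R) :
  inLp P p G f -> inLp P p G (fun w => f w + c).
Proof.
move=> [mf nf]; split.
  move=> B mB.
  have -> : (fun w => f w + c) @^-1` B = f @^-1` ((fun x => x + c) @^-1` B) by [].
  apply: mf.
  have : measurable_fun setT (fun x : R => x + c).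
    by apply: continuous_measurable_fun => x; apply: cvgD; [exact: cvg_id | exact: cvg_cst].
  by move=> /(_ measurableT B mB); rewrite setTI.
have mf' : measurable_fun [set: Omega] f.
  by move=> _ B mB; rewrite setTI; apply: hG; apply: mf.
have mc : measurable_fun [set: Omega] (cst c : Omega -> R) by [].
rewrite (le_lt_trans (@eminkowski _ _ _ P f (cst c) p mf' mc hp))//.
rewrite lte_add_pinfty//.
case: p hp {nf} => [r hr|_|//].
  have := @Lfun_cst _ _ _ P c r.
  by rewrite inE => /andP[_]; rewrite inE.
rewrite unlock /=; case: ifPn => // _.
apply: (le_lt_trans (y := `|c|%:E)); last by rewrite ltry.
apply/ess_supP; apply: nearW => x /=; by [].
Qed.
Section Shift.
Context (d : measure_display) (Omega : measurableType d)
  (R : realType) (P : probability Omega R) (p : \bar R) 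
  (T : R) (Fl : R -> set (set Omega))
  (S : R -> Omega -> R)
  (stoch_int : (R -> Omega -> R) -> (R -> Omega -> R) -> R -> Omega -> R)
  (rho : (Omega -> R) -> \bar R).
Hypothesis shiftLp : forall f c, inLp P p (Fl T) f -> inLp P p (Fl T) (fun w => f w + c).
Hypothesis rho_tr : forall X (m : R), inLp P p (Fl T) X -> rho (fun w => X w + m) = (rho X + m%:E)%E.

Definition AA (K : Omega -> R) (q : R) := [set X | admissible T Fl stoch_int S q X /\
             inLp P p (Fl T) (fun w => K w - X T w)].
Definition IM K q := [set rho (fun w => K w - X T w) | X in AA K q].

Lemma image_shift K q1 q2 : IM K q1 `<=` [set (x + (q2 - q1)%:E)%E | x in IM K q2].
Proof.
move=> _ [X [[xi [axi [c hc]]] lp] <-].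
pose X' := fun t w => X t w + (q2 - q1).
have lp' : inLp P p (Fl T) (fun w => K w - X' T w).
  have := @shiftLp _ (q1 - q2) lp; rewrite /X'; congr inLp; apply: funext => w; rewrite /X'; ring.
exists (rho (fun w => K w - X' T w)).
  exists X' => //; split => //; exists xi; split => //; exists (c + (q2 - q1)).
  move=> t ht w; have [e1 e2] := hc t ht w; rewrite /X' e1; split; first by ring.
  by move: e2; rewrite e1; lra.
rewrite -rho_tr //; congr rho; apply: funext => w; rewrite /X'; ring.
Qed.

Lemma IM_eq K q : IM K q = [set (x - q%:E)%E | x in IM K 0].
Proof.
apply/seteqP; split.
  move=> x /(@image_shift K q 0) [y hy <-]; exists y => //; by rewrite sub0r.
move=> _ [x /(@image_shift K 0 q) [y hy <-] <-].
by rewrite subr0 -addeA -EFinD subrr adde0.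
Qed.

Lemma inf_shift (A : set (\bar R)) (c : R) :
  ereal_inf [set (x + c%:E)%E | x in A] = (ereal_inf A + c%:E)%E.
Proof.
apply/le_anti/andP; split.
  rewrite -leeBlDr //; apply/ereal_infP => x Ax.
  rewrite leeBlDr //; apply: ereal_inf_lbound; by exists x.
apply/ereal_infP => _ [x Ax <-]; apply: leeD2r; exact: ereal_inf_lbound.
Qed.

Lemma mr_shift K q : ereal_inf (IM K q) = (ereal_inf (IM K 0) - q%:E)%E.
Proof. by rewrite IM_eq -EFinN inf_shift. Qed.
End Shift.
Section Pure.
Context {R : realType}.
Variables (a b : \bar R) (rw rb : R -> \bar R).
Hypothesis Ew : forall q, rw q = (a - q%:E)%E.
Hypothesis Eb : forall q, rb q = (b + q%:E)%E.

Lemma ERP q : equal_risk_price rw rb q <->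
  [/\ a \is a fin_num, b \is a fin_num & q = (fine a - fine b) / 2].
Proof.
rewrite /equal_risk_price Ew Eb; split.
  move=> [e f].
  have fa : a \is a fin_num by move: f; rewrite fin_numB => /andP[].
  have fb : b \is a fin_num.
    by move: f; rewrite e fin_numD => /andP[].
  split => //.
  move: e; rewrite -(fineK fa) -(fineK fb) -EFinB -EFinD => -[e].
  have -> : q = (fine a - fine b) / 2 - (fine a - q - (fine b + q)) / 2 by field.
  by rewrite e subrr mul0r subr0.
move=> [fa fb ->]; rewrite -(fineK fa) -(fineK fb) -EFinB -EFinD; split => //.
congr EFin; field.
done.
Qed.

Local Open Scope ereal_scope.
Lemma FWfin : a \is a fin_num -> fair_w rw = a.
Proof.
move=> fa; rewrite /fair_w -(fineK fa).
apply/le_anti/andP; split.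
  apply: ge_ereal_inf; exists (fine a)%:E => //; exists (fine a) => //=.
  by rewrite Ew fineK // subee.
apply/ereal_infP => _ [x /= h <-].
by move: h; rewrite Ew -(fineK fa) -EFinB lee_fin subr_le0.
Qed.

Lemma FWnf : a \isn't a fin_num -> fair_w rw \isn't a fin_num.
Proof.
case: a Ew => [r|Ew' _|Ew' _] //.
  rewrite /fair_w.
  have -> : [set p | rw p <= 0] = set0.
    by apply/seteqP; split => x //=; rewrite Ew'.
  by rewrite image_set0 ereal_inf0.
rewrite /fair_w.
have -> : [set p | rw p <= 0] = setT.
  by apply/seteqP; split => x //= _; rewrite Ew' leNye.
by rewrite (_ : ereal_inf _ = -oo) //; exact: ereal_inf_real.
Qed.

Lemma FBfin : b \is a fin_num -> fair_b rb = - b.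
Proof.
move=> fb; rewrite /fair_b -(fineK fb).
apply/le_anti/andP; split.
  apply/ereal_supP => _ [x /= h <-].
  by move: h; rewrite Eb -(fineK fb) -EFinD /= !lee_fin; lra.
apply: ereal_sup_ubound; exists (- fine b)%R; last by rewrite EFinN.
by rewrite /= Eb -(fineK fb) -EFinD /= lee_fin; lra.
Qed.

Lemma FBnf : b \isn't a fin_num -> fair_b rb \isn't a fin_num.
Proof.
case: b Eb => [r|Eb' _|Eb' _] //.
  rewrite /fair_b.
  have -> : [set p | rb p <= 0] = set0.
    by apply/seteqP; split => x //=; rewrite Eb'.
  by rewrite image_set0 ereal_sup0.
rewrite /fair_b.
have -> : [set p | rb p <= 0] = setT.
  by apply/seteqP; split => x //= _; rewrite Eb' leNye.
by rewrite (_ : ereal_sup _ = +oo) //; exact: ereal_sup_real.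
Qed.
End Pure.
Arguments ERP {R a b rw rb}.
Arguments FWfin {R a rw}.
Arguments FWnf {R a rw}.
Arguments FBfin {R b rb}.
Arguments FBnf {R b rb}.
Local Close Scope ereal_scope.
Theorem proposition1 (d : measure_display) (Omega : measurableType d)
  (R : realType) (P : probability Omega R) (p : \bar R) (hp : (1 <= p)%E)
  (T : R) (hT : 0 <= T) (Fl : R -> set (set Omega)) (hFl : filtration T Fl)
  (S : R -> Omega -> R) (hS : adapted T Fl S)
  (n : nat) (Y : 'I_n -> R -> Omega -> R) (hY : forall i, adapted T Fl (Y i))
  (F : R -> ('I_n -> R) -> R)
  (stoch_int : (R -> Omega -> R) -> (R -> Omega -> R) -> R -> Omega -> R)
  (rhow rhob : (Omega -> R) -> \bar R)
  (hw : convex_risk_measure P p (Fl T) rhow)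
  (hb : convex_risk_measure P p (Fl T) rhob) :
  let H := fun w => F (S T w) (fun i => Y i T w) in
  let rw := min_risk_w P p T Fl stoch_int S rhow H in
  let rb := min_risk_b P p T Fl stoch_int S rhob H in
  ((exists! p0, equal_risk_price rw rb p0) <->
     (fair_w rw \is a fin_num /\ fair_b rb \is a fin_num)) /\
  (forall p0, (exists! q, equal_risk_price rw rb q) ->
     equal_risk_price rw rb p0 ->
     p0%:E = ((rw 0%R - rb 0%R) * (2^-1)%R%:E)%E /\
     ((fair_b rb <= fair_w rw)%E ->
        p0%:E = ((fair_b rb + fair_w rw) * (2^-1)%R%:E)%E)).
Proof.
move=> H rw rb.
have hG : Fl T `<=` measurable.
  by have [_ ?] := hFl.1 T (ltac:(by rewrite hT lexx)).
have shL : forall f c, inLp P p (Fl T) f -> inLp P p (Fl T) (fun w => f w + c).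
  by move=> f c; apply: inLp_shift.
have trw := hw.2.2.1; have trb := hb.2.2.1.
set a := ereal_inf (@IM _ _ _ P p T Fl S stoch_int rhow H 0).
set b := ereal_inf (@IM _ _ _ P p T Fl S stoch_int rhob (fun w => - H w) 0).
have Ew : forall q, rw q = (a - q%:E)%E.
  by move=> q; exact: (@mr_shift _ _ _ P p T Fl S stoch_int rhow shL trw H q).
have Eb : forall q, rb q = (b + q%:E)%E.
  move=> q; have h := (@mr_shift _ _ _ P p T Fl S stoch_int rhob shL trb (fun w => - H w) (- q)).
  by rewrite EFinN oppeK in h; exact: h.
split.
  split.
    move=> [q [/(ERP Ew Eb) [fa fb _] _]].
    rewrite (FWfin Ew fa) (FBfin Eb fb); split => //. by rewrite fin_numN.
  move=> [f1 f2].
  have fa : a \is a fin_num.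
    by apply: contraLR f1 => /(FWnf Ew).
  have fb : b \is a fin_num.
    by apply: contraLR f2 => /(FBnf Eb).
  exists ((fine a - fine b) / 2); split; first by apply/(ERP Ew Eb).
  by move=> q /(ERP Ew Eb) [_ _ ->].
move=> p0 _ /(ERP Ew Eb) [fa fb ->].
rewrite Ew Eb (FWfin Ew fa) (FBfin Eb fb) -(fineK fa) -(fineK fb).
split.
  by rewrite /= -EFinD -EFinM; congr EFin; field.

move=> _; rewrite -EFinD -EFinM /=; congr EFin; field.
by [].
Qed.
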